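(* Let $\Sigma$ be an alphabet with $|\Sigma|\ge 3$. A function $f\colon\Sigma^*\to\Sigma^*$ is RCP if and only if there exist $n\in\mathbb{N}$ and words $w_0,\ldots,w_n\in\Sigma^*$ such that $f(x)=w_0xw_1x\cdots w_{n-1}xw_n$ for all $x\in\Sigma^*$.
   Context: $\Sigma^*$ denotes the free monoid over $\Sigma$: finite words over $\Sigma$ with concatenation, unit the empty word $\varepsilon$. A restricted congruence on $\Sigma^*$ is the kernel $\{(u,v)\mid \varphi(u)=\varphi(v)\}$ of a monoid morphism $\varphi\colon\Sigma^*\to\Sigma^*$. A function $f\colon(\Sigma^* )^k\to\Sigma^*$ is RCP if it preserves every restricted congruence, i.e. for every monoid morphism $\varphi\colon\Sigma^*\to\Sigma^*$ and all $u_1,\ldots,u_k,v_1,\ldots,v_k\in\Sigma^*$ with $\varphi(u_i)=\varphi(v_i)$ for all $i$, we have $\varphi(f(u_1,\ldots,u_k))=\varphi(f(v_1,\ldots,v_k))$. *)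

(* Defs.v *)
From mathcomp Require Import all_boot.
Set Implicit Arguments. Unset Strict Implicit. Unset Printing Implicit Defensive.

Definition monoid_morphism (Sigma : Type) (phi : seq Sigma -> seq Sigma) : Prop :=
  phi [::] = [::] /\ forall u v : seq Sigma, phi (u ++ v) = phi u ++ phi v.

Definition RCP (Sigma : Type) (f : seq Sigma -> seq Sigma) : Prop :=
  forall phi : seq Sigma -> seq Sigma, monoid_morphism phi ->
  forall u v : seq Sigma, phi u = phi v -> phi (f u) = phi (f v).

(* w_0 x w_1 x ... w_{n-1} x w_n, for ws = [:: w_0; ...; w_n] (nonempty). *)
Fixpoint interleave (Sigma : Type) (w0 : seq Sigma) (ws : seq (seq Sigma))
  (x : seq Sigma) : seq Sigma :=
  match ws with
  | [::] => w0
  | w1 :: ws' => w0 ++ x ++ interleave w1 ws' x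
  end.

(* Main.v *)
Require Import Defs.
From mathcomp Require Import all_boot.
Set Implicit Arguments. Unset Strict Implicit. Unset Printing Implicit Defensive.

Definition hom (S : eqType) (h : S -> seq S) (u : seq S) : seq S := flatten (map h u).

Lemma hom_cat (S : eqType) (h : S -> seq S) u v : hom h (u ++ v) = hom h u ++ hom h v.
Proof. by rewrite /hom map_cat flatten_cat. Qed.
Lemma hom_nil (S : eqType) (h : S -> seq S) : hom h [::] = [::]. Proof. by []. Qed.
Lemma hom_cons (S : eqType) (h : S -> seq S) t u : hom h (t :: u) = h t ++ hom h u.
Proof. by []. Qed.
Lemma hom1 (S : eqType) (h : S -> seq S) t : hom h [:: t] = h t.
Proof. by rewrite hom_cons cats0. Qed.
Lemma hom_mm (S : eqType) (h : S -> seq S) : Defs.monoid_morphism (hom h).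
Proof. split=> //; exact: hom_cat. Qed.

Lemma RCP_hom (S : eqType) (f : seq S -> seq S) (h : S -> seq S) u v :
  RCP f -> hom h u = hom h v -> hom h (f u) = hom h (f v).
Proof. move=> Hf; exact: Hf (hom_mm h) u v. Qed.

Lemma hom_ext (S : eqType) (h1 h2 : S -> seq S) u :
  (forall t, t \in u -> h1 t = h2 t) -> hom h1 u = hom h2 u.
Proof.
elim: u => // t u IH H; rewrite !hom_cons H ?mem_head // IH // => s Hs.
by apply: H; rewrite in_cons Hs orbT.
Qed.

Lemma hom_comp (S : eqType) (g h : S -> seq S) u :
  hom g (hom h u) = hom (fun t => hom g (h t)) u.
Proof. by elim: u => // t u IH; rewrite !hom_cons hom_cat IH. Qed.

Lemma hom_id_on (S : eqType) (h : S -> seq S) u :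
  (forall t, t \in u -> h t = [:: t]) -> hom h u = u.
Proof.
elim: u => // t u IH H; rewrite hom_cons H ?mem_head // IH // => s Hs.
by apply: H; rewrite in_cons Hs orbT.
Qed.

Lemma catL (S : Type) (s t1 t2 : seq S) : s ++ t1 = s ++ t2 -> t1 = t2.
Proof. by elim: s => // x s IH [] /IH. Qed.

Definition piece (S : Type) (x : seq S) (o : option S) : seq S :=
  match o with Some d => [:: d] | None => x end.
Definition tsubst (S : Type) (tau : seq (option S)) (x : seq S) : seq S :=
  flatten [seq piece x o | o <- tau].

Lemma tsubst_cons (S : Type) o (tau : seq (option S)) x :
  tsubst (o :: tau) x = piece x o ++ tsubst tau x.
Proof. by []. Qed.

Lemma hom_tsubst (S : eqType) (h : S -> seq S) tau x :
  hom h (tsubst tau x) =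
  flatten [seq (match o with Some d => h d | None => hom h x end) | o <- tau].
Proof.
elim: tau => // o tau IH; rewrite tsubst_cons hom_cat IH /=.
by case: o => //= d; rewrite hom1.
Qed.

Lemma RCP_tsubst (S : eqType) (h : S -> seq S) tau x y :
  hom h x = hom h y -> hom h (tsubst tau x) = hom h (tsubst tau y).
Proof. by rewrite !hom_tsubst => ->. Qed.

Lemma interleave_cons (S : Type) (d : S) w0 ws x :
  interleave (d :: w0) ws x = d :: interleave w0 ws x.
Proof. by case: ws. Qed.

Lemma tsubst_interleave (S : Type) (tau : seq (option S)) :
  exists n (w : nat -> seq S), forall x,
    tsubst tau x = interleave (w 0) [seq w i.+1 | i <- iota 0 n] x.
Proof.
elim: tau => [|o tau [n [w IH]]].
  by exists 0, (fun _ => [::]).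
case: o => [d|].
  exists n, (fun i => if i is 0 then d :: w 0 else w i) => x.
  by rewrite tsubst_cons IH /= interleave_cons.
exists n.+1, (fun i => if i is i'.+1 then w i' else [::]) => x.
rewrite tsubst_cons IH /=; congr (_ ++ interleave _ _ _).
rewrite -[1]/(1 + 0) iotaDl -map_comp; apply: eq_map => i /=.
by rewrite add1n.
Qed.

Lemma interleave_RCP (S : Type) (phi : seq S -> seq S) w0 ws u v :
  Defs.monoid_morphism phi -> phi u = phi v ->
  phi (interleave w0 ws u) = phi (interleave w0 ws v).
Proof.
move=> [_ Hc] Huv; elim: ws w0 => //= w1 ws IH w0.
by rewrite !Hc Huv IH.
Qed.

Definition kap (S : eqType) (c g : S) (t : S) : seq S := [:: if t == c then c else g].
Definition sub (S : eqType) (c : S) (x : seq S) (t : S) : seq S := if t == c then x else [:: t].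
Definition er (S : eqType) (c : S) (t : S) : seq S := if t == c then [::] else [:: t].
Definition pr (S : eqType) (d e : S) (t : S) : seq S :=
  if (t == d) || (t == e) then [:: t] else [::].

Lemma hom_kap (S : eqType) (c g : S) F :
  hom (kap c g) F = [seq (if t == c then c else g) | t <- F].
Proof. by elim: F => // t F IH; rewrite hom_cons IH. Qed.

Lemma hom_kap_free (S : eqType) (c g : S) x :
  c \notin x -> hom (kap c g) x = nseq (size x) g.
Proof.
elim: x => // t x IH; rewrite in_cons negb_or => /andP [tc xc].
by rewrite hom_cons IH // /kap eq_sym (negbTE tc).
Qed.

Lemma hom_sub_free (S : eqType) (c : S) y x :
  c \notin x -> hom (sub c y) x = x.
Proof.
move=> xc; apply: hom_id_on => t tx; rewrite /sub; case: eqP => // E.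
by move: xc; rewrite -E tx.
Qed.

Lemma hom_sub_c (S : eqType) (c : S) y : hom (sub c y) [:: c] = y.
Proof. by rewrite hom1 /sub eqxx. Qed.

Lemma IL (S : eqType) (c g : S) (y : seq S) F1 F2 : g != c ->
  hom (kap c g) F1 = hom (kap c g) F2 -> hom (sub c y) F1 = hom (sub c y) F2 ->
  F1 = F2.
Proof.
move=> gc; elim: F1 F2 => [|d F1 IH] [|e F2] //; rewrite ?hom_cons //.
move=> [Hh Ht]; rewrite /sub.
case: (eqVneq d c) Hh => [->|dc]; case: (eqVneq e c) => [->|ec] //=.
- by move=> _ /catL H; rewrite (IH F2).
- by move=> E; move: gc; rewrite E eqxx.
- by move=> E; move: gc; rewrite E eqxx.
- by move=> _ [-> /(IH _ Ht) ->].
Qed.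

Lemma proj2_inj (S : eqType) (u v : seq S) :
  (forall d e, hom (pr d e) u = hom (pr d e) v) -> u = v.
Proof.
elim: u v => [|t u IH] [|e v] H //.
- by move: (H e e); rewrite hom_cons /pr eqxx.
- by move: (H t t); rewrite hom_cons /pr eqxx.
case: (eqVneq t e) => [E|te]; first subst e.
  congr (_ :: _); apply: IH => d e'; move: (H d e'); rewrite !hom_cons.
  exact: catL.
by move: (H t e); rewrite !hom_cons /pr !eqxx orbT /= => -[E]; move: te; rewrite E eqxx.
Qed.

Lemma mem_hom_pr (S : eqType) (d e t : S) x :
  t \in hom (pr d e) x -> (t == d) || (t == e).
Proof.
elim: x => // s x IH; rewrite hom_cons mem_cat => /orP [|/IH //].
by rewrite /pr; case: ifP => // H; rewrite inE => /eqP ->.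
Qed.

Lemma hom_pr_idem (S : eqType) (d e : S) x :
  hom (pr d e) (hom (pr d e) x) = hom (pr d e) x.
Proof. by apply: hom_id_on => t /mem_hom_pr; rewrite /pr => ->. Qed.

Lemma hom_pr_er (S : eqType) (d e h : S) u : h != d -> h != e ->
  hom (pr d e) (hom (er h) u) = hom (pr d e) u.
Proof.
move=> hd he; rewrite hom_comp; apply: hom_ext => t _; rewrite /er.
case: eqP => [->|_]; last by rewrite hom1.
by rewrite /pr (negbTE hd) (negbTE he).
Qed.

Fixpoint mkT (S : eqType) (c : S) (W : seq S) (M : seq bool) : seq (option S) :=
  match W with
  | [::] => [::]
  | w :: W' => (if (w == c) && head false M then None else Some w) :: mkT c W' (behead M)
  end.

Lemma tsubst_mkT_c (S : eqType) (c : S) W M : tsubst (mkT c W M) [:: c] = W.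
Proof.
elim: W M => // w W IH M; rewrite /= tsubst_cons IH.
by case: ifP => //= /andP [/eqP -> _].
Qed.

Lemma P3 (S : eqType) (a b c : S) k f F' V : a != b -> 0 < k -> f != c ->
  hom (sub c (a :: nseq k.-1 b)) (f :: F') = (a :: nseq k.-1 b) ++ V ->
  c \notin take k (f :: F').
Proof.
move=> ab k0 fc H; apply/negP => Hin.
have Hi := index_ltn Hin.
have cF : c \in f :: F' := mem_take Hin.
have i0 : 0 < index c (f :: F') by rewrite /= /index /= (negbTE fc).
move: Hi i0 H.
have Fsplit : f :: F' = take (index c (f :: F')) (f :: F') ++
      c :: drop (index c (f :: F')).+1 (f :: F').
  by rewrite -{1}(cat_take_drop (index c (f :: F')) (f :: F')) (drop_nth c) ?index_mem // nth_index.
have ct : c \notin take (index c (f :: F')) (f :: F') by rewrite in_take // ltnn.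
have szt : size (take (index c (f :: F')) (f :: F')) = index c (f :: F').
  by rewrite size_takel // ltnW // index_mem.
move: ct szt Fsplit; set F := f :: F'; set i := index c F => ct szt ->.
rewrite hom_cat hom_cons hom_sub_free // /sub eqxx => Hi i0.
move/(congr1 (fun s => nth a s i)); rewrite nth_cat szt ltnn subnn /=.
clearbody i; case: i Hi i0 ct szt => [|i] Hi i0 _ _ //=.
have Hi' : i < k.-1 by rewrite -ltnS prednK.
by rewrite nth_cat size_nseq Hi' nth_nseq Hi' => E; move: ab; rewrite E eqxx.
Qed.

Lemma slot_split (S : eqType) (c : S) x F V k : size x = k -> c \notin take k F ->
  hom (sub c x) F = x ++ V -> take k F = x /\ hom (sub c x) (drop k F) = V.
Proof.
move=> sx nt H.
have sz : k <= size F.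
  rewrite leqNgt; apply/negP => lt.
  move: nt H; rewrite take_oversize ?(ltnW lt) // => nt.
  rewrite hom_sub_free // => /(congr1 size); rewrite size_cat sx => E.
  by move: lt; rewrite E ltnNge leq_addr.
move: H; rewrite -{1}(cat_take_drop k F) hom_cat hom_sub_free // => /eqP.
by rewrite eqseq_cat ?size_takel ?sx // => /andP [/eqP -> /eqP ->].
Qed.

Lemma CL (S : eqType) (a b c : S) k : a != b -> a != c -> b != c -> 0 < k ->
  forall W F2 F3,
  hom (kap c a) F2 = hom (kap c a) F3 ->
  hom (sub c (nseq k b)) F2 = hom (sub c (nseq k b)) W ->
  hom (sub c (a :: nseq k.-1 b)) F3 = hom (sub c (a :: nseq k.-1 b)) W ->
  exists M, F3 = tsubst (mkT c W M) (a :: nseq k.-1 b).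
Proof.
move=> ab ac bc k0.
have sx3 : size (a :: nseq k.-1 b) = k by rewrite /= size_nseq prednK.
have sx2 : size (nseq k b) = k by rewrite size_nseq.
have hx2 : forall s, head a (nseq k b ++ s) = b by case: k k0 {sx3 sx2}.
elim=> [|w W IH] F2 F3 HK H2 H3.
  exists [::]; case: F3 H3 {HK} => // f F3; rewrite hom_cons /sub.
  by case: (f == c).
case: F3 HK H3 => [|f3 F3'] HK H3.
  by move: H3; rewrite hom_cons /sub; case: (w == c).
case: F2 HK H2 => [|f2 F2'] HK H2.
  by move: HK; rewrite hom_cons.
have HK0 := HK.
move: HK; rewrite !hom_cons => -[Hh HK].
case: (eqVneq f3 c) => [f3c|f3c].
  have f2c : f2 = c.
    move: Hh; rewrite f3c eqxx; case: eqP => // _ E.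
    by move: ac; rewrite E eqxx.
  subst f2 f3; move: H2 H3; rewrite !hom_cons /sub eqxx.
  case: (eqVneq w c) => [->|wc].
    move=> /catL H2 /catL H3; have [M HM] := IH _ _ HK H2 H3.
    by exists (false :: M); rewrite /= andbF tsubst_cons HM.
  move=> /(congr1 (head a)) /= H2 /(congr1 (head a)) /= H3.
  by move: H2 ab; rewrite -H3 /= hx2 => ->; rewrite eqxx.
have f2c : f2 != c.
  move: Hh; rewrite (negbTE f3c); case: eqP => // _ E.
  by move: ac; rewrite E eqxx.
case: (eqVneq w c) => [wc|wc]; last first.
  move: H2 H3; rewrite !hom_cons /sub (negbTE f3c) (negbTE f2c) (negbTE wc).
  move=> [E2 H2] [E3 H3]; have [M HM] := IH _ _ HK H2 H3.
  by exists (false :: M); rewrite /= (negbTE wc) tsubst_cons HM E3.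
subst w.
move: H2 H3 HK0; set F3 := f3 :: F3'; set F2 := f2 :: F2' => H2 H3 HK0.
rewrite [X in _ = X]hom_cons /sub eqxx -/(sub c _) in H3.
rewrite [X in _ = X]hom_cons /sub eqxx -/(sub c _) in H2.
have nt3 : c \notin take k F3 by apply: (P3 ab k0 f3c H3).
have [e3 H3'] := slot_split sx3 nt3 H3.
have HKm : [seq (if t == c then c else a) | t <- F2] =
           [seq (if t == c then c else a) | t <- F3] by rewrite -!hom_kap.
have nt2 : c \notin take k F2.
  apply/negP => Hc.
  have : c \in take k [seq (if t == c then c else a) | t <- F2].
    by rewrite -map_take; apply/mapP; exists c => //; rewrite eqxx.
  rewrite HKm -map_take => /mapP [t Ht]; case: eqP => [E _|_ E].
    by move: nt3; rewrite -E Ht.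
  by move: ac; rewrite E eqxx.
have [_ H2'] := slot_split sx2 nt2 H2.
have HK' : hom (kap c a) (drop k F2) = hom (kap c a) (drop k F3).
  by rewrite !hom_kap !map_drop HKm.
have [M HM] := IH _ _ HK' H2' H3'.
exists (true :: M); rewrite /= eqxx /= tsubst_cons /= -HM -cat_cons -e3.
by rewrite cat_take_drop.
Qed.

Lemma INJ (S : eqType) (a b c : S) W : a != b -> c != b -> a != c ->
  forall M M',
  hom (er b) (tsubst (mkT c W M) [:: a]) = hom (er b) (tsubst (mkT c W M') [:: a]) ->
  mkT c W M = mkT c W M'.
Proof.
move=> ab cb ac; elim: W => // w W IH M M'.
rewrite /= !tsubst_cons !hom_cat.
have ea : hom (er b) [:: a] = [:: a] by rewrite hom1 /er (negbTE ab).
case E1: ((w == c) && head false M); case E2: ((w == c) && head false M') => /=.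
- by move=> /catL /IH ->.
- move: E1 => /andP [/eqP -> _]; rewrite ea hom1 /er (negbTE cb) => -[E].
  by move: ac; rewrite E eqxx.
- move: E2 => /andP [/eqP -> _]; rewrite ea hom1 /er (negbTE cb) => -[E].
  by move: ac; rewrite E eqxx.
- by move=> /catL /IH ->.
Qed.

Lemma three (S : eqType) (a b c d e : S) : a != b -> a != c -> b != c ->
  [|| (a != d) && (a != e), (b != d) && (b != e) | (c != d) && (c != e)].
Proof.
move=> ab ac bc.
case: (eqVneq a d) => [E|ad]; first subst d.
  rewrite /= (eq_sym b a) ab (eq_sym c a) ac /=.
  by case: (eqVneq b e) => [E|//]; subst e; rewrite (eq_sym c b) bc orbT.
case: (eqVneq a e) => [E|ae] //=; subst e.
rewrite (eq_sym b a) ab (eq_sym c a) ac /= !andbT.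
by case: (eqVneq b d) => [E|//]; subst d; rewrite (eq_sym c b) bc.
Qed.

Lemma hom_er_nseq (S : eqType) (b : S) n : hom (er b) (nseq n b) = [::].
Proof. by elim: n => // n IH; rewrite /= hom_cons IH /er eqxx. Qed.

Theorem mainTheorem3 (Sigma : finType) (hS : 3 <= #|Sigma|)
  (f : seq Sigma -> seq Sigma) :
  RCP f <->
  exists (n : nat) (w : nat -> seq Sigma),
    forall x : seq Sigma, f x = interleave (w 0) [seq w i.+1 | i <- iota 0 n] x.
Proof.
split; last first.
  by move=> [n [w Hw]] phi Hphi u v Huv; rewrite !Hw; apply: interleave_RCP.
move=> Hf.
have [a [b [c [ab ac bc]]]] : exists a b c : Sigma, [/\ a != b, a != c & b != c].
  move: hS; rewrite cardE; have := enum_uniq Sigma.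
  case: (enum Sigma) => [|a [|b [|c s]]] //= /andP [Ha /andP [Hb _]] _.
  move: Ha Hb; rewrite !inE !negb_or => /andP [ab /andP [ac _]] /andP [bc _].
  by exists a, b, c.
set W := f [:: c].
have Hk : forall k, 0 < k -> exists M, forall x, c \notin x -> size x = k ->
    f x = tsubst (mkT c W M) x.
  move=> k k0.
  have x3f : c \notin a :: nseq k.-1 b.
    by rewrite inE mem_nseq negb_or eq_sym ac /= negb_and (eq_sym c b) bc orbT.
  have x2f : c \notin nseq k b by rewrite mem_nseq negb_and (eq_sym c b) bc orbT.
  have sx3 : size (a :: nseq k.-1 b) = k by rewrite /= size_nseq prednK.
  have HK : hom (kap c a) (f (nseq k b)) = hom (kap c a) (f (a :: nseq k.-1 b)).
    by apply: RCP_hom => //; rewrite !hom_kap_free // sx3 size_nseq.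
  have H2 : hom (sub c (nseq k b)) (f (nseq k b)) = hom (sub c (nseq k b)) W.
    by apply: (@RCP_hom _ f _ _ [:: c]) => //; rewrite hom_sub_free // hom_sub_c.
  have H3 : hom (sub c (a :: nseq k.-1 b)) (f (a :: nseq k.-1 b)) =
            hom (sub c (a :: nseq k.-1 b)) W.
    by apply: (@RCP_hom _ f _ _ [:: c]) => //; rewrite hom_sub_free // hom_sub_c.
  have [M HM] := CL ab ac bc k0 HK H2 H3.
  exists M => x xc sx; apply: (@IL _ c a x) => //.
    rewrite (@RCP_hom _ f _ x (a :: nseq k.-1 b)) //; last first.
      by rewrite !hom_kap_free // sx sx3.
    rewrite HM; apply: RCP_tsubst; by rewrite !hom_kap_free // sx sx3.
  rewrite (@RCP_hom _ f _ x [:: c]) //; last by rewrite hom_sub_free // hom_sub_c.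
  transitivity (hom (sub c x) (tsubst (mkT c W M) [:: c])).
    by rewrite tsubst_mkT_c.
  by apply: RCP_tsubst; rewrite hom_sub_c hom_sub_free.
have [M1 HM1] := Hk 1 isT.
set tau := mkT c W M1.
have cb : c != b by rewrite eq_sym.
have af : c \notin [:: a] by rewrite inE eq_sym.
have bf : c \notin [:: b] by rewrite inE eq_sym.
have Hfree1 : forall x, c \notin x -> 0 < size x -> f x = tsubst tau x.
  move=> x xc sx; have [Mk HMk] := Hk (size x) sx; rewrite HMk //.
  congr tsubst; apply: (INJ ab cb ac).
  have x3f : c \notin a :: nseq (size x).-1 b.
    by rewrite inE mem_nseq negb_or eq_sym ac /= negb_and (eq_sym c b) bc orbT.
  have sx3 : size (a :: nseq (size x).-1 b) = size x by rewrite /= size_nseq prednK.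
  have E3 : hom (er b) (a :: nseq (size x).-1 b) = hom (er b) [:: a].
    by rewrite hom_cons hom_er_nseq hom1 cats0.
  rewrite -(@RCP_tsubst _ _ _ _ _ E3) -HMk // -HM1 //.
  exact: RCP_hom.
set G := tsubst tau.
have Gc : f [:: c] = G [:: c] by rewrite /G /tau tsubst_mkT_c.
have G0 : f [::] = G [::].
  apply: proj2_inj => d e.
  have [h [Hh hd he]] : exists h, [/\ f [:: h] = G [:: h], h != d & h != e].
    have := three d e ab ac bc; case/or3P => /andP [hd he].
    - by exists a; split => //; apply: Hfree1.
    - by exists b; split => //; apply: Hfree1.
    - by exists c.
  rewrite -(hom_pr_er _ hd he) -[RHS](hom_pr_er _ hd he); congr (hom _ _).
  transitivity (hom (er h) (f [:: h])).
    by apply: RCP_hom => //; rewrite hom1 /er eqxx.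
  by rewrite Hh; apply: RCP_tsubst; rewrite hom1 /er eqxx.
have Gfree : forall x, c \notin x -> f x = G x.
  by move=> [|t x] xc //; apply: Hfree1.
have Host : forall (h g : Sigma) y, g != h -> g != c -> h != c -> h \notin y ->
    f y = G y.
  move=> h g y gh gc hc hy; apply: (@IL _ h g y) => //.
    have hn : h \notin nseq (size y) g by rewrite mem_nseq negb_and eq_sym gh orbT.
    rewrite (@RCP_hom _ f _ y (nseq (size y) g)) //; last first.
      by rewrite !hom_kap_free // size_nseq.
    rewrite Gfree; last by rewrite mem_nseq negb_and eq_sym gc orbT.
    by apply: RCP_tsubst; rewrite !hom_kap_free // size_nseq.
  rewrite (@RCP_hom _ f _ y [:: h]) //; last by rewrite hom_sub_free // hom_sub_c.
  rewrite Gfree; last by rewrite inE eq_sym.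
  by apply: RCP_tsubst; rewrite hom_sub_c hom_sub_free.
have Hall : forall x, f x = G x.
  move=> x; apply: proj2_inj => d e.
  have key : f (hom (pr d e) x) = G (hom (pr d e) x).
    case: (boolP ((c != d) && (c != e))) => [/andP [cd ce]|Hc].
      apply: Gfree; apply/negP => /mem_hom_pr /orP [] /eqP E.
        by move: cd; rewrite E eqxx.
      by move: ce; rewrite E eqxx.
    have := three d e ab ac bc; rewrite (negbTE Hc) orbF.
    case/orP => /andP [hd he].
      apply: (@Host a b); rewrite ?(eq_sym b a) //.
      apply/negP => /mem_hom_pr /orP [] /eqP E.
        by move: hd; rewrite E eqxx.
      by move: he; rewrite E eqxx.
    apply: (@Host b a) => //.
    apply/negP => /mem_hom_pr /orP [] /eqP E.
      by move: hd; rewrite E eqxx.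
    by move: he; rewrite E eqxx.
  rewrite (@RCP_hom _ f _ x (hom (pr d e) x)) //; last by rewrite hom_pr_idem.
  by rewrite key; apply: RCP_tsubst; rewrite hom_pr_idem.
have [n [w Hw]] := tsubst_interleave tau.
by exists n, w => x; rewrite Hall /G Hw.
Qed.
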